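(* Let $X$ be a Hausdorff $P$-space. The following are equivalent: (1) $X$ is locally Menger; (2) for each $x\in X$ and each open set $V$ with $x\in V$ there exist an open set $U$ and a Menger subspace $Y$ of $X$ such that $x\in U\subseteq Y\subseteq V$; (3) for each $x\in X$ there exists an open set $U$ with $x\in U$ such that $\overline{U}$ is Menger; (4) $X$ has a basis consisting of closed Menger neighbourhoods.
   Context: A space $X$ is Menger if for each sequence $(\mathcal{U}_n)$ of open covers of $X$ there is a sequence $(\mathcal{V}_n)$ with each $\mathcal{V}_n$ a finite subset of $\mathcal{U}_n$ and $\bigcup_{n}\bigcup\mathcal{V}_n=X$. A space $X$ is locally Menger if for each $x\in X$ there exist an open set $U$ and a Menger subspace $Y$ of $X$ with $x\in U\subseteq Y$. A $P$-space is a space in which every countable intersection of open sets is open. *)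

(* Defs.v *)
From HB Require Import structures.
From mathcomp Require Import all_boot all_order.
From mathcomp Require Import all_classical.
From mathcomp Require Import topology.
Set Implicit Arguments. Unset Strict Implicit. Unset Printing Implicit Defensive.
Local Open Scope classical_set_scope.

Section Defs.
Context {X : topologicalType}.

Definition rel_open (Y A : set X) : Prop :=
  exists O : set X, open O /\ A = Y `&` O.

Definition open_cover_of (Y : set X) (U : set (set X)) : Prop :=
  (forall A, U A -> rel_open Y A) /\ Y `<=` \bigcup_(A in U) A.

Definition Menger_subspace (Y : set X) : Prop :=
  forall Us : nat -> set (set X), (forall n, open_cover_of Y (Us n)) ->
  exists Vs : nat -> set (set X),
    (forall n, finite_set (Vs n) /\ Vs n `<=` Us n) /\
    Y `<=` \bigcup_n \bigcup_(A in Vs n) A.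

Definition Menger_space : Prop := Menger_subspace setT.

Definition P_space : Prop :=
  forall F : nat -> set X, (forall n, open (F n)) -> open (\bigcap_n F n).

Definition locally_Menger : Prop :=
  forall x : X, exists (U Y : set X),
    open U /\ U x /\ U `<=` Y /\ Menger_subspace Y.
End Defs.

(* Main.v *)
Require Import Defs.
From HB Require Import structures.
From mathcomp Require Import all_boot all_order.
From mathcomp Require Import all_classical.
From mathcomp Require Import topology.
Local Open Scope classical_set_scope.

Section Aux.
Context {X : topologicalType}.

Lemma open_fin_bigcap (F : set (set X)) (g : set X -> set X) :
  finite_set F -> (forall A, F A -> open (g A)) -> open (\bigcap_(A in F) g A).
Proof.
move=> fF og; rewrite openE => x Hx.
rewrite /interior /= -(fset_setK fF).
apply: filter_bigI => i iD.
have Fi : F i by move: iD; rewrite in_fset_set // inE.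
apply: open_nbhs_nbhs; split; first exact: og.
exact: Hx.
Qed.

Lemma closed_sub_Menger (Y C : set X) : Menger_subspace Y -> closed C ->
  C `<=` Y -> Menger_subspace C.
Proof.
move=> MY cC CY Us cU.
pose Us' := fun n => [set B | (exists A O, Us n A /\ open O /\ A = C `&` O /\
   B = Y `&` O) \/ B = Y `&` ~` C].
have cU' : forall n, open_cover_of Y (Us' n).
  move=> n; split.
  - move=> B [[A [O [_ [oO [_ ->]]]]] | ->]; first by exists O.
    by exists (~` C); split => //; exact: closed_openC.
  - move=> y Yy; case: (pselect (C y)) => Cy.
      have [A UA Ay] := (cU n).2 y Cy.
      have [O [oO eA]] := (cU n).1 A UA.
      exists (Y `&` O); first by left; exists A, O.
      by split => //; move: Ay; rewrite eA => -[].
    by exists (Y `&` ~` C); [right | split].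
have [Vs' [fV cV]] := MY Us' cU'.
exists (fun n => [set C `&` B | B in Vs' n] `&` Us n); split.
  move=> n; split; last by move=> A [].
  apply: (sub_finite_set _ (finite_image (fun B => C `&` B) (fV n).1)).
  by move=> A [].
move=> c Cc; have [n _ [B VB Bc]] := cV c (CY c Cc).
exists n => //.
have := (fV n).2 B VB; case=> [[A [O [UA [oO [eA eB]]]]] | eB]; last first.
  by exfalso; move: Bc; rewrite eB => -[].
have eCB : C `&` B = A.
  rewrite eA eB; apply/seteqP; split => w /=.
    by case=> Cw [_ Ow].
  by case=> Cw Ow; split => //; split => //; exact: CY.
exists A; first by split => //; exists B.
by rewrite -eCB.
Qed.

Lemma Menger_sep (hX : hausdorff_space X) (hP : @P_space X) (K : set X) x :
  Menger_subspace K -> ~ K x -> exists W O : set X,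
  open W /\ open O /\ W x /\ K `<=` O /\ W `&` O `<=` set0.
Proof.
move=> MK nKx.
have H : forall z, exists p : set X * set X, K z ->
    [/\ open p.1, open p.2, p.1 z, p.2 x & p.1 `&` p.2 = set0].
  move=> z; case: (pselect (K z)) => Kz; last by exists (set0, set0).
  have zx : z != x by apply/eqP => e; apply: nKx; rewrite -e.
  move: hX; rewrite open_hausdorff => hX'.
  have [[A B] [/= Az Bx] [oA oB /eqP AB0]] := hX' z x zx.
  exists (A, B) => _; split => //.
    by move: Az; rewrite inE.
  by move: Bx; rewrite inE.
case: (choice H) => p Hp.
pose Us := fun _ : nat => [set A | exists z, K z /\ A = K `&` (p z).1].
have cov : forall n, open_cover_of K (Us n).
  move=> n; split.
    move=> A [z [Kz ->]]; exists (p z).1; split => //.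
    by case: (Hp z Kz).
  move=> k Kk; exists (K `&` (p k).1); first by exists k.
  by split => //; case: (Hp k Kk).
have [Vs [fV cV]] := MK Us cov.
have H2 : forall A, exists z, Us 0 A -> K z /\ A = K `&` (p z).1.
  move=> A; case: (pselect (Us 0 A)) => [[z hz]|nA]; first by exists z.
  by exists x.
case: (choice H2) => zA HzA.
exists (\bigcap_n \bigcap_(A in Vs n) (p (zA A)).2),
       (\bigcup_n \bigcup_(A in Vs n) (p (zA A)).1).
split.
  apply: hP => n; apply: open_fin_bigcap (fV n).1 _ => A VA.
  have [KzA _] := HzA A ((fV n).2 A VA).
  by case: (Hp _ KzA).
split.
  apply: bigcup_open => n _; apply: bigcup_open => A VA.
  have [KzA _] := HzA A ((fV n).2 A VA).
  by case: (Hp _ KzA).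
split.
  move=> n _ A VA.
  have [KzA _] := HzA A ((fV n).2 A VA).
  by case: (Hp _ KzA).
split.
  move=> k Kk; have [n _ [A VA Ak]] := cV k Kk.
  exists n => //; exists A => //.
  have [KzA eA] := HzA A ((fV n).2 A VA).
  by move: Ak; rewrite {1}eA => -[].
move=> y [Wy [n _ [A VA Ay]]].
have [KzA _] := HzA A ((fV n).2 A VA).
have Wy' := Wy n I A VA.
case: (Hp _ KzA) => _ _ _ _ e0.
have : ((p (zA A)).1 `&` (p (zA A)).2) y by split.
by rewrite e0.
Qed.

Lemma Menger_closed (hX : hausdorff_space X) (hP : @P_space X) (K : set X) :
  Menger_subspace K -> closed K.
Proof.
move=> MK; rewrite -openC openE => y nKy.
have [W [O [oW [oO [Wy [KO WO]]]]]] := Menger_sep hX hP _ _ MK nKy.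
rewrite /interior /=.
apply: (filterS _ (@open_nbhs_nbhs _ y W (conj oW Wy))).
move=> w Ww Kw; apply: (WO w); split => //; exact: KO.
Qed.

End Aux.
Arguments closed_sub_Menger {X Y C}.
Arguments Menger_sep {X} hX hP {K x}.
Arguments Menger_closed {X} hX hP {K}.

Theorem theorem3p7 (X : topologicalType) :
  hausdorff_space X -> @P_space X ->
  let c1 := @locally_Menger X in
  let c2 := forall (x : X) (V : set X), open V -> V x ->
      exists (U Y : set X), open U /\ U x /\ U `<=` Y /\ Y `<=` V /\
        Menger_subspace Y in
  let c3 := forall x : X, exists U : set X,
      open U /\ U x /\ Menger_subspace (closure U) in
  let c4 := exists B : set (set X),
      (forall A, B A -> closed A /\ Menger_subspace A) /\
      (forall (x : X) (V : set X), open V -> V x ->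
         exists A, B A /\ nbhs x A /\ A `<=` V) in
  (c1 <-> c2) /\ (c1 <-> c3) /\ (c1 <-> c4).
Proof.
move=> hX hP c1 c2 c3 c4.
have c12 : c1 -> c2.
  move=> h x V oV Vx; have [U [Y [oU [Ux [UY MY]]]]] := h x.
  have cY := Menger_closed hX hP MY.
  pose K := Y `&` ~` V.
  have MK : Menger_subspace K.
    apply: (closed_sub_Menger MY _ (@subIsetl _ _ _)).
    apply: closedI cY _; exact: open_closedC.
  have nKx : ~ K x by case.
  have [W [O [oW [oO [Wx [KO WO]]]]]] := Menger_sep hX hP MK nKx.
  exists (U `&` W), (Y `&` ~` O); split; first exact: openI.
  split; first by split.
  split.
    move=> w [Uw Ww]; split; first exact: UY.
    by move=> Ow; apply: (WO w).
  split.
    move=> w [Yw nOw]; case: (pselect (V w)) => // nV.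
    by exfalso; apply: nOw; apply: KO.
  apply: (closed_sub_Menger MY _ (@subIsetl _ _ _)).
  apply: closedI cY _; exact: open_closedC.
have c21 : c2 -> c1.
  move=> h x; have [U [Y [oU [Ux [UY [_ MY]]]]]] := h x setT openT I.
  by exists U, Y.
have c13 : c1 -> c3.
  move=> h x; have [U [Y [oU [Ux [UY MY]]]]] := h x.
  exists U; split => //; split => //.
  apply: (closed_sub_Menger MY (@closed_closure _ U)).
  have cY := Menger_closed hX hP MY.
  rewrite ((closure_id Y).1 cY); exact: closureS.
have c31 : c3 -> c1.
  move=> h x; have [U [oU [Ux MU]]] := h x.
  exists U, (closure U); split => //; split => //; split => //.
  exact: subset_closure.
have c14 : c1 -> c4.
  move=> h; have h2 := c12 h.
  exists [set A | closed A /\ Menger_subspace A]; split; first by [].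
  move=> x V oV Vx; have [U [Y [oU [Ux [UY [YV MY]]]]]] := h2 x V oV Vx.
  exists Y; split; first by split => //; exact: Menger_closed MY.
  split => //.
  apply: (filterS UY); apply: open_nbhs_nbhs; by split.
have c41 : c4 -> c1.
  move=> [B [hB hV]] x; have [A [BA [nA _]]] := hV x setT openT I.
  move: nA; rewrite nbhsE => -[U [oU Ux] UA].
  by exists U, A; split => //; split => //; split => //; case: (hB A BA).
by split; [split | split; split].
Qed.
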